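(* Let $A\in\mathbb{R}^{n\times n}$ be a symmetric irreducible invertible $M$-matrix. Let $u\in\mathbb{R}^n$ be a nonzero vector with $u\le 0$ (entrywise), and set $\alpha=u^TA^{-1}u$. Then the $(n+1)\times(n+1)$ matrix $B=\begin{pmatrix}A & u\\ u^T & \alpha\end{pmatrix}$ is a $P_{\#}$-matrix.
   Context: A $Z$-matrix is a real square matrix with nonpositive off-diagonal entries. An $M$-matrix is a matrix of the form $sI-C$ with $C\ge 0$ entrywise and $s\ge\rho(C)$ (spectral radius); it is invertible iff $s>\rho(C)$. $A$ is reducible if it is permutationally similar to $\begin{pmatrix}B&0\\C&D\end{pmatrix}$ with $B,D$ square (or $n=1$ and $A=0$), irreducible otherwise. A matrix $M$ is a $P_{\#}$-matrix if: $x\in R(M)$ (range of $M$) and $x_i(Mx)_i\le 0$ for all $i$ imply $x=0$. *)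

(* Defs.v *)
From HB Require Import structures.
From mathcomp Require Import all_boot all_order all_algebra all_fingroup.
From mathcomp Require Import complex.
Set Implicit Arguments. Unset Strict Implicit. Unset Printing Implicit Defensive.
Import Order.TTheory GRing.Theory Num.Theory.
Local Open Scope ring_scope.

Definition Zmatrix (R : realFieldType) n (A : 'M[R]_n) : Prop :=
  forall i j : 'I_n, i != j -> A i j <= 0.

Definition nonneg_mx (R : realFieldType) m n (C : 'M[R]_(m, n)) : Prop :=
  forall i j, 0 <= C i j.

(* the complex eigenvalues of a real square matrix: roots of its
   characteristic polynomial viewed over complex R *)
Definition ceigen (R : rcfType) n (C : 'M[R]_n) (z : complex R) : Prop :=
  root (map_poly (fun x : R => (x%:C)%C) (char_poly C)) z.

Definition spec_rad_lt (R : rcfType) n (C : 'M[R]_n) (s : R) : Prop :=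
  forall z : complex R, ceigen C z -> `|z| < (s%:C)%C.

Definition invertible_Mmatrix (R : rcfType) n (A : 'M[R]_n) : Prop :=
  exists (s : R) (C : 'M[R]_n),
    [/\ nonneg_mx C, A = s%:M - C & spec_rad_lt C s].

(* reducible: permutationally similar to [[B,0],[C,D]] with B, D square
   (nontrivial blocks), or n = 1 and A = 0 *)
Definition reducible (R : ringType) n (A : 'M[R]_n) : Prop :=
  (n = 1%N /\ A = 0) \/
  exists (s : 'S_n) (k : nat), [/\ (0 < k)%N, (k < n)%N &
    forall i j : 'I_n, (i < k)%N -> (k <= j)%N ->
      (perm_mx s *m A *m (perm_mx s)^T) i j = 0].

Definition irreducible_mx (R : ringType) n (A : 'M[R]_n) : Prop :=
  ~ reducible A.

Definition Psharp (R : realFieldType) n (M : 'M[R]_n) : Prop :=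
  forall x : 'cV[R]_n, (exists y : 'cV[R]_n, x = M *m y) ->
    (forall i, x i 0 * (M *m x) i 0 <= 0) -> x = 0.

Definition border (R : ringType) n (A : 'M[R]_n) (u : 'cV[R]_n) (a : R)
  : 'M[R]_(n + 1) :=
  block_mx A u u^T a%:M.

(* Main.v *)
Require Import Defs.
From mathcomp Require Import all_boot all_order all_algebra all_fingroup.
From mathcomp Require Import complex.
Import Order.TTheory GRing.Theory Num.Theory.
Local Open Scope ring_scope.
Section S. Variable R : rcfType.
Lemma t1 n (A : 'M[R]_n) : A^T = A -> map_mx (real_complex R) A \is hermsymmx.
Proof.
move=> sA; apply: realsym_hermsym.
  apply/is_hermitianmxP; rewrite expr0 scale1r map_mx_id //.
  by apply/matrixP=> i j; rewrite !mxE -[in LHS]sA mxE.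
apply/forallP => i; apply/forallP => j; rewrite mxE; apply/complex_realP; eexists; reflexivity.
Qed.

Lemma t2 n (A : 'M[R]_n) : A^T = A -> invertible_Mmatrix A ->
  forall i, 0 < spectral_diag (map_mx (real_complex R) A) 0 i.
Proof.
move=> sA [s [C [C0 AE rC]]] i.
set Ac := map_mx _ A.
have Ah := @t1 n A sA.
have /orthomx_spectralP Aeq := hermitian_normalmx Ah; rewrite -/Ac in Aeq.
set P := spectralmx Ac in Aeq; set D := spectral_diag Ac in Aeq *.
have Pu : P \in unitmx := spectral_unit Ac.
have ev : row i P *m Ac = D 0 i *: row i P.
  by rewrite {1}Aeq !mulmxA -!row_mul mulmxV // mul1mx row_mul row_diag_mx -scalemxAl -rowE.
have Dr : D 0 i \is Num.real.
  by have /mxOverP := hermitian_spectral_diag_real Ah; apply.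
have : ceigen C ((s%:C)%C - D 0 i).
  rewrite /ceigen (map_char_poly (real_complex R)) -eigenvalue_root_char.
  apply/eigenvalueP; exists (row i P).
    have -> : map_mx (real_complex R) C = (s%:C)%C%:M - Ac.
      by rewrite /Ac AE map_mxB /= map_scalar_mx opprB addrC subrK.
    by rewrite mulmxBr ev mul_mx_scalar scalerBl.
  apply/negP => /eqP r0.
  have := congr1 (fun M => M *m invmx P) r0; rewrite /= rowE mulmxK // mul0mx.
  by move=> /matrixP/(_ 0 i); rewrite !mxE !eqxx /= => /eqP; rewrite oner_eq0.
move/rC => h.
have sR : (s%:C)%C \is Num.real by apply/complex_realP; eexists.
rewrite real_ltNge ?real0 //; apply/negP => d0.
have : (s%:C)%C < (s%:C)%C.
  apply: le_lt_trans h; apply: le_trans (real_ler_norm (rpredB sR Dr)).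
  by rewrite lerDl oppr_ge0.
by rewrite ltxx.
Qed.

Lemma cr (x : R) : Num.conj (x%:C)%C = (x%:C)%C. 
Proof. apply/CrealP. apply/complex_realP. by exists x. Qed.

Lemma t3 n (A : 'M[R]_n) : A^T = A -> invertible_Mmatrix A ->
  forall v : 'rV[R]_n, v != 0 -> 0 < (v *m A *m v^T) 0 0.
Proof.
move=> sA hM v v0.
have Dpos := @t2 n A sA hM.
set Ac := map_mx (real_complex R) A in Dpos.
have Ah := @t1 n A sA.
have /orthomx_spectralP Aeq := hermitian_normalmx Ah; rewrite -/Ac in Aeq.
set P := spectralmx Ac in Aeq; set D := spectral_diag Ac in Aeq Dpos.
have Pu : P \in unitmx := spectral_unit Ac.
have Pun : P \is unitarymx := spectral_unitarymx Ac.
set vc := map_mx (real_complex R) v.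
have vcT : map_mx Num.conj vc^T = map_mx (real_complex R) v^T.
  by apply/matrixP => i j; rewrite !mxE cr.
have key : ((v *m A *m v^T) 0 0)%:C%C = (vc *m Ac *m map_mx Num.conj vc^T) 0 0.
  by rewrite vcT /vc /Ac -!map_mxM [RHS]mxE.
set y := vc *m map_mx Num.conj P^T.
have yT : map_mx Num.conj y^T = P *m map_mx Num.conj vc^T.
  by rewrite /y trmx_mul map_mxM trmxCK.
have qE : (vc *m Ac *m map_mx Num.conj vc^T) 0 0 = \sum_j (y 0 j * D 0 j) * (y 0 j)^*.
  rewrite Aeq invmx_unitary // !mulmxA -/y -mulmxA -yT mxE.
  by apply: eq_bigr => j _; rewrite mul_mx_diag !mxE.
have y0 : y != 0.
  apply/negP => /eqP y0; move: v0; rewrite -(map_mx_eq0 (real_complex R)) -/vc.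
  have : vc = y *m P by rewrite /y -invmx_unitary // mulmxKV.
  by rewrite y0 mul0mx => ->; rewrite eqxx.
have [j yj] : exists j, y 0 j != 0.
  apply/existsP; move: y0; apply: contraNT; rewrite negb_exists => /forallP H.
  by apply/eqP/matrixP => a b; rewrite ord1 [RHS]mxE; move: (H b); rewrite negbK => /eqP.
have : (0 : R)%:C%C < ((v *m A *m v^T) 0 0)%:C%C.
  rewrite key qE (bigD1 j) //=.
  apply: (@lt_le_trans _ _ ((y 0 j * D 0 j) * (y 0 j)^*)).
    by rewrite mulrAC pmulr_rgt0 ?mul_conjC_gt0.
  rewrite lerDl sumr_ge0 // => k _.
  by rewrite mulrAC mulr_ge0 ?mul_conjC_ge0 // ltW.
by rewrite ltcR.
Qed.
End S.

Theorem mainTheorem4 (R : rcfType) (n : nat) (A : 'M[R]_n) (u : 'cV[R]_n) :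
  A^T = A -> irreducible_mx A -> invertible_Mmatrix A ->
  u != 0 -> (forall i, u i 0 <= 0) ->
  Psharp (border A u ((u^T *m invmx A *m u) 0 0)).
Proof.
move=> sA _ hM _ _.
have pd := @t3 R n A sA hM.
have Au : A \in unitmx.
  rewrite unitmxE unitfE; apply/negP => /det0P [v v0 vA].
  by have := pd v v0; rewrite vA mul0mx mxE ltxx.
set L : 'M[R]_(n + 1, n) := col_mx 1%:M (u^T *m invmx A).
have BE : border A u ((u^T *m invmx A *m u) 0 0) = L *m A *m L^T.
  rewrite /L tr_col_mx trmx_mul trmxK trmx_inv sA trmx1 mul_col_mx mul1mx.
  rewrite mulmxKV // mul_col_row !mulmx1 mulKVmx // /border -mx11_scalar.
  by rewrite mulmxA.
move=> x [y xE] H.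
set B := border _ _ _ in xE H BE.
have q0 : (x^T *m (B *m x)) 0 0 <= 0.
  rewrite mxE; apply: sumr_le0 => i _; rewrite [x^T 0 i]mxE; exact: H.
set z := L^T *m x.
have qz : (x^T *m (B *m x)) 0 0 = (z^T *m A *m z) 0 0.
  by rewrite BE /z trmx_mul trmxK !mulmxA.
have z0 : z = 0.
  apply/eqP; apply: contraT => nz.
  have := pd z^T; rewrite trmx_eq0 trmxK -qz => /(_ nz) h.
  by rewrite leNgt h in q0.
have xx : (x^T *m x) 0 0 = 0.
  rewrite {1}xE BE !trmx_mul -!mulmxA -/z z0 !mulmx0 mxE.
  by [].
apply/matrixP => i j; rewrite ord1 [RHS]mxE.
move: xx; rewrite mxE => /psumr_eq0P h.
have hp : forall k : 'I_(n + 1), true -> 0 <= x^T 0 k * x k 0.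
  by move=> k _; rewrite mxE -expr2 sqr_ge0.
have := h hp i isT.
by move/eqP; rewrite mxE mulf_eq0 orbb => /eqP.
Qed.
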